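(* Let $A\in\mathbb{R}^{n\times n}$ be symmetric. Let $V_N=[v_1,\ldots,v_N]\in\mathbb{R}^{n\times M}$, where each block vector $v_j$ has $n$ rows, and let $T_N\in\mathbb{R}^{M\times M}$ be a symmetric block tridiagonal matrix (with diagonal blocks $\alpha_j$, subdiagonal blocks $\beta_{j}$ and superdiagonal blocks $\beta_j^T$) such that the perturbed block Lanczos recurrence \[ AV_N=V_NT_N+\left[\Delta v_1,\ldots,\Delta v_{k-1},\Delta\widetilde v_k,\ldots,\Delta\widetilde v_N\right] \] holds (i.e. the recurrence terminates with $\beta_{N+1}=0$), where each perturbation block $\Delta v_j$, $\Delta \widetilde v_j$ has the same size as $v_j$, and \[ \max\left(\|\Delta v_1\|,\ldots,\|\Delta v_{k-1}\|,\|\Delta\widetilde v_k\|,\ldots,\|\Delta\widetilde v_N\|\right)\le\epsilon_2\|A\| \] for some $\epsilon_2>0$. Let $T_N=S_N\Theta_NS_N^T$ be a spectral decomposition with $S_N^TS_N=I$, $S_N=[s_1^{(N)},\ldots,s_M^{(N)}]$, $\Theta_N=\mathrm{diag}(\theta_1^{(N)},\ldots,\theta_M^{(N)})$, and define the Ritz vectors $z_i^{(N)}=V_Ns_i^{(N)}$. Suppose $\epsilon_1>0$ (independent of $i,j$) is such that for every Ritz pair $(\theta_i^{(N)},z_i^{(N)})$ with $\|z_i^{(N)}\|<0.5$ there exists a Ritz pair $(\theta_j^{(N)},z_j^{(N)})$ with \[ \|z_j^{(N)}\|\ge 0.5\quad\text{and}\quad|\theta_i^{(N)}-\theta_j^{(N)}|\le\epsilon_1\|A\|.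 \] Then each eigenvalue of $T_N$ lies within $3\max\left(\sqrt{N}\epsilon_2,\epsilon_1\right)\|A\|$ of an eigenvalue of $A$.
   Context: All norms are spectral (2-)norms. A ''block vector'' is an $n\times p_j$ matrix; $I_p$ and $0_p$ denote the $p\times p$ identity and zero matrices. *)

(* Defs.v *)
From HB Require Import structures.
From mathcomp Require Import all_boot all_order all_algebra.
From mathcomp Require Import boolp classical_sets reals.
Set Implicit Arguments. Unset Strict Implicit. Unset Printing Implicit Defensive.
Import Order.TTheory GRing.Theory Num.Theory.
Local Open Scope ring_scope.

Definition vnorm (R : realType) (n : nat) (x : 'cV[R]_n) : R :=
  Num.sqrt (\sum_(i < n) x i 0 ^+ 2).

Definition mxnorm (R : realType) (m n : nat) (A : 'M[R]_(m, n)) : R :=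
  sup [set vnorm (A *m x) | x in [set x : 'cV[R]_n | vnorm x <= 1]]%classic.

Definition block_tridiag (R : realType) (N : nat) (p : 'I_N -> nat)
  (T : 'M[R]_(\sum_(j < N) p j)) : Prop :=
  forall i j : 'I_N, (i.+1 < j)%N \/ (j.+1 < i)%N ->
    @submxblock R N N p p T i j = 0.

(* Main.v *)
Require Import Defs.
From HB Require Import structures.
From mathcomp Require Import all_boot all_order all_algebra.
From mathcomp Require Import boolp classical_sets reals.
From mathcomp Require Import ring lra.
From mathcomp Require Import complex.
Import Order.TTheory GRing.Theory Num.Theory.
Set Implicit Arguments. Unset Strict Implicit. Unset Printing Implicit Defensive.
Local Open Scope ring_scope.

Section CS.
Variable R : realFieldType.
Lemma CS (I : finType) (a b : I -> R) :
  (\sum_i a i * b i) ^+ 2 <= (\sum_i a i ^+ 2) * (\sum_i b i ^+ 2).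
Proof.
have H0 : 0 <= \sum_i \sum_j (a i * b j - a j * b i) ^+ 2.
  by apply: sumr_ge0 => i _; apply: sumr_ge0 => j _; apply: sqr_ge0.
have E : \sum_i \sum_j (a i * b j - a j * b i) ^+ 2 =
   \sum_i \sum_j (a i ^+ 2 * b j ^+ 2) + \sum_i \sum_j (a j ^+ 2 * b i ^+ 2)
   - 2 * \sum_i \sum_j (a i * b i) * (a j * b j).
  rewrite mulr_sumr -!big_split -sumrB /=; apply: eq_bigr => i _.
  rewrite mulr_sumr -!big_split -sumrB /=; apply: eq_bigr => j _.
  ring.
have E2 : \sum_i \sum_j (a j ^+ 2 * b i ^+ 2) = \sum_i \sum_j (a i ^+ 2 * b j ^+ 2).
  rewrite exchange_big /=; apply: eq_bigr => i _; apply: eq_bigr => j _; ring.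
have E3 : (\sum_i a i ^+ 2) * (\sum_i b i ^+ 2) = \sum_i \sum_j (a i ^+ 2 * b j ^+ 2).
  rewrite mulr_suml; apply: eq_bigr => i _; by rewrite mulr_sumr.
have E4 : (\sum_i a i * b i) ^+ 2 = \sum_i \sum_j (a i * b i) * (a j * b j).
  rewrite expr2 mulr_suml; apply: eq_bigr => i _; by rewrite mulr_sumr.
rewrite E E2 in H0; rewrite E3 E4; lra.
Qed.
End CS.

Section V.
Variable R : realType.

Lemma vnorm_ge0 n (x : 'cV[R]_n) : 0 <= vnorm x.
Proof. exact: sqrtr_ge0. Qed.

Lemma sumsq_ge0 n (x : 'cV[R]_n) : 0 <= \sum_i x i 0 ^+ 2.
Proof. by apply: sumr_ge0 => i _; apply: sqr_ge0. Qed.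

Lemma vnorm_sq n (x : 'cV[R]_n) : vnorm x ^+ 2 = \sum_i x i 0 ^+ 2.
Proof. by rewrite /vnorm sqr_sqrtr // sumsq_ge0. Qed.

Lemma vnormE n (x : 'cV[R]_n) : vnorm x ^+ 2 = (x^T *m x) 0 0.
Proof. by rewrite vnorm_sq !mxE; apply: eq_bigr => i _; rewrite !mxE expr2. Qed.

Lemma vnorm0 n : vnorm (0 : 'cV[R]_n) = 0.
Proof. by rewrite /vnorm big1 ?sqrtr0 // => i _; rewrite mxE expr0n. Qed.

Lemma vnormZ n a (x : 'cV[R]_n) : vnorm (a *: x) = `|a| * vnorm x.
Proof.
rewrite /vnorm -sqrtr_sqr -sqrtrM ?sqr_ge0 //; congr Num.sqrt.
by rewrite mulr_sumr; apply: eq_bigr => i _; rewrite mxE exprMn.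
Qed.

Lemma vnorm_eq0 n (x : 'cV[R]_n) : (vnorm x == 0) = (x == 0).
Proof.
apply/idP/idP; last by move/eqP->; rewrite vnorm0.
move=> /eqP h; have : \sum_i x i 0 ^+ 2 = 0 by rewrite -vnorm_sq h expr0n.
move/eqP; rewrite psumr_eq0; last by move=> i _; apply: sqr_ge0.
move=> /allP h2; apply/eqP/matrixP => i j; rewrite ord1 mxE.
by have := h2 i (mem_index_enum _); rewrite sqrf_eq0 => /eqP.
Qed.

Lemma vnormD n (x y : 'cV[R]_n) : vnorm (x + y) <= vnorm x + vnorm y.
Proof.
rewrite -(ler_pXn2r (_ : (0 < 2)%N)) ?nnegrE ?addr_ge0 ?vnorm_ge0 //.
rewrite vnorm_sq sqrrD !vnorm_sq.
have -> : \sum_i (x + y) i 0 ^+ 2 = \sum_i x i 0 ^+ 2 + \sum_i y i 0 ^+ 2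
   + 2 * \sum_i x i 0 * y i 0.
  rewrite mulr_sumr -!big_split /=; apply: eq_bigr => i _; rewrite mxE; ring.
have cs := CS (fun i => x i 0) (fun i => y i 0).
have h : \sum_i x i 0 * y i 0 <= vnorm x * vnorm y.
  case: (lerP 0 (\sum_i x i 0 * y i 0)) => hn; last first.
    by apply: le_trans (ltW hn) _; rewrite mulr_ge0 ?vnorm_ge0.
  rewrite -(ler_pXn2r (_ : (0 < 2)%N)) ?nnegrE ?mulr_ge0 ?vnorm_ge0 //.
  by rewrite exprMn !vnorm_sq.
lra.
Qed.
End V.

Section V.

Variable R : realType.

Lemma vnorm_sum n (I : finType) (F : I -> 'cV[R]_n) :
  vnorm (\sum_i F i) <= \sum_i vnorm (F i).
Proof.
apply: (big_ind2 (fun x y => vnorm x <= y)) => //.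
- by rewrite vnorm0.
- move=> x1 x2 y1 y2 h1 h2 /=; exact: le_trans (vnormD x1 y1) (lerD h1 h2).
Qed.

Lemma entry_le n (x : 'cV[R]_n) k : `|x k 0| <= vnorm x.
Proof.
rewrite -sqrtr_sqr /vnorm ler_sqrt ?sumsq_ge0 //.
rewrite (bigD1 k) //= lerDl; apply: sumr_ge0 => i _; exact: sqr_ge0.
Qed.

Lemma mulmx_cols m n (M : 'M[R]_(m, n)) (x : 'cV[R]_n) :
  M *m x = \sum_j x j 0 *: col j M.
Proof.
apply/matrixP => i k; rewrite ord1 !mxE summxE; apply: eq_bigr => j _.
by rewrite !mxE mulrC.
Qed.

Lemma mxnorm_hasub m n (M : 'M[R]_(m, n)) :
  has_ubound [set vnorm (M *m x) | x in [set x : 'cV[R]_n | vnorm x <= 1]]%classic.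
Proof.
exists (\sum_j vnorm (col j M)) => _ [x /= hx <-].
rewrite mulmx_cols; apply: le_trans (vnorm_sum _) _.
apply: ler_sum => j _; rewrite vnormZ.
rewrite -[leRHS]mul1r ler_wpM2r ?vnorm_ge0 //.
exact: le_trans (entry_le _ _) hx.
Qed.

Lemma mxnorm_ub m n (M : 'M[R]_(m, n)) x : vnorm x <= 1 ->
  vnorm (M *m x) <= mxnorm M.
Proof.
move=> hx; apply: (ub_le_sup (mxnorm_hasub M)); by exists x.
Qed.

Lemma mxnorm_ge0 m n (M : 'M[R]_(m, n)) : 0 <= mxnorm M.
Proof.
have h := @mxnorm_ub m n M 0; rewrite mulmx0 !vnorm0 in h; exact: h ler01.
Qed.

Lemma mxnormP m n (M : 'M[R]_(m, n)) y :
  vnorm (M *m y) <= mxnorm M * vnorm y.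
Proof.
have [->|hy] := eqVneq y 0.
  by rewrite mulmx0 !vnorm0 mulr0.
have hp : 0 < vnorm y by rewrite lt_def vnorm_eq0 hy vnorm_ge0.
have h := @mxnorm_ub m n M ((vnorm y)^-1 *: y).
rewrite vnormZ ger0_norm ?invr_ge0 ?vnorm_ge0 // mulVf ?gt_eqF // in h.
have := h (lexx _); rewrite -scalemxAr vnormZ ger0_norm ?invr_ge0 ?vnorm_ge0 //.
by rewrite ler_pdivrMl // mulrC.
Qed.
End V.

Module SpM.
Import Num.Def.
Local Open Scope sesquilinear_scope.


Section Sp.
Variable R : realType.
Local Notation C := (R[i]).
Local Notation fC := (real_complex R).

Lemma fC_real (x : R) : fC x \is Num.real.
Proof. by rewrite complex_real. Qed.

Lemma conj_fC (x : R) : (fC x)^*%R = fC x.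
Proof. exact/conj_Creal/fC_real. Qed.

Lemma conj_map m n (M : 'M[R]_(m, n)) : map_mx conjC (map_mx fC M) = map_mx fC M.
Proof. by apply/matrixP => i j; rewrite !mxE conj_fC. Qed.

Lemma fC_quad n (y : 'cV[R]_n) :
  fC ((y^T *m y) 0 0) = ((map_mx fC y)^t* *m map_mx fC y) 0 0.
Proof. by rewrite map_trmx conj_map -map_mxM [RHS]mxE. Qed.

Lemma quad_unitary n (Q : 'M[C]_n) (v : 'cV[C]_n) : Q^t* *m Q = 1%:M ->
  (Q *m v)^t* *m (Q *m v) = v^t* *m v.
Proof.
move=> H. rewrite trmx_mul. rewrite map_mxM. rewrite mulmxA -(mulmxA _ _ Q) H mulmx1 //.
Qed.

Lemma quadE n (v : 'cV[C]_n) : (v^t* *m v) 0 0 = \sum_k (v k 0)^* * v k 0.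
Proof. by rewrite mxE; apply: eq_bigr => k _; rewrite !mxE. Qed.

Lemma sym_spectral_quad n (B : 'M[R]_n) (z : 'cV[R]_n) : B^T = B ->
  exists e : 'I_n -> R, exists rho : 'I_n -> R,
   [/\ forall k, eigenvalue B (e k), forall k, 0 <= rho k,
       (z^T *m z) 0 0 = \sum_k rho k &
       ((B *m z)^T *m (B *m z)) 0 0 = \sum_k e k ^+ 2 * rho k].
Proof.
move=> Bsym.
pose Bc := map_mx fC B.
have Bh : Bc \is hermsymmx.
  apply: realsym_hermsym.
    by apply/is_hermitianmxP; rewrite expr0 scale1r map_mx_id // /Bc map_trmx Bsym.
  by apply/mxOverP => i j; rewrite mxE fC_real.
have /orthomx_spectralP HBc := hermitian_normalmx Bh.
set P := spectralmx Bc in HBc; set d := spectral_diag Bc in HBc.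
have Pu : P \is unitarymx := spectral_unitarymx Bc.
have Punit : P \in unitmx := spectral_unit Bc.
have invP : invmx P = P^t* := invmx_unitary Pu.
have dreal : d \is a realmx := hermitian_spectral_diag_real Bh.
pose zc := map_mx fC z.
pose w := P *m zc.
pose e k := @complex.Re R (d 0 k).
pose rho k := @complex.Re R ((w k 0)^* * w k 0).
have de k : d 0 k = fC (e k).
  by rewrite /e RRe_real //; move/mxOverP : dreal; apply.
have wr k : (w k 0)^* * w k 0 = fC (rho k).
  rewrite /rho RRe_real //; apply: ger0_real; rewrite mulrC; exact: mulcJ_ge0.
have PtP : P^t* *m P = 1%:M by rewrite -invP mulVmx.
have PPt : (P^t*)^t* *m P^t* = 1%:M by rewrite trmxCK; apply/unitarymxP.
exists e, rho; split.
- move=> k; have ev : eigenvalue Bc (d 0 k).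
    apply/eigenvalueP; exists (row k P).
      rewrite -row_mul.
      have -> : P *m Bc = diag_mx d *m P by rewrite HBc !mulmxA mulmxV // mul1mx.
      by rewrite row_mul row_diag_mx -scalemxAl -rowE.
    apply/negP => /eqP h0.
    have : row k (P *m invmx P) = 0 by rewrite row_mul h0 mul0mx.
    rewrite mulmxV // => /rowP /(_ k); rewrite !mxE eqxx /= => /eqP.
    by rewrite oner_eq0.
  by move: ev; rewrite !eigenvalue_root_char -map_char_poly de fmorph_root.
- move=> k; rewrite -ler0c -wr mulrC; exact: mulcJ_ge0.
- apply: (@complexI R); rewrite fC_quad -/zc rmorph_sum /=.
  rewrite -(quad_unitary zc PtP) quadE; apply: eq_bigr => k _; exact: wr.
- apply: (@complexI R); rewrite fC_quad map_mxM -/zc -/Bc rmorph_sum /=.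
  have -> : Bc *m zc = P^t* *m (diag_mx d *m w).
    by rewrite HBc invP !mulmxA.
  rewrite (quad_unitary _ PPt) quadE; apply: eq_bigr => k _.
  rewrite mul_diag_mx mxE rmorphM /= de conj_fC.
  have -> : fC (e k ^+ 2 * rho k) = fC (e k) ^+ 2 * fC (rho k) by rewrite rmorphM rmorphXn.
  rewrite -wr; ring.
Qed.
End Sp.

End SpM.
Import SpM.

Section K.
Variable R : realType.

Lemma near_eig n (A : 'M[R]_n) (th c : R) (z : 'cV[R]_n) : A^T = A ->
  1 / 2 <= vnorm z -> vnorm (A *m z - th *: z) <= c ->
  exists lam, eigenvalue A lam /\ `|th - lam| <= 2 * c.
Proof.
move=> HA hz hc.
pose B := A - th%:M.
have HB : B^T = B by rewrite /B linearB /= tr_scalar_mx HA.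
have HBz : B *m z = A *m z - th *: z by rewrite /B mulmxBl mul_scalar_mx.
have [e [rho [eig rho0 hs hb]]] := sym_spectral_quad z HB.
set s := (z^T *m z) 0 0 in hs; set b := ((B *m z)^T *m (B *m z)) 0 0 in hb.
have sE : s = vnorm z ^+ 2 by rewrite vnormE.
have bE : b = vnorm (B *m z) ^+ 2 by rewrite vnormE.
have spos : 0 < s by rewrite sE; apply: exprn_gt0; apply: lt_le_trans hz; lra.
have [k0 hk0] : exists k, 0 < rho k.
  case: (pickP (fun k => 0 < rho k)) => [k hk|none]; first by exists k.
  have : \sum_k rho k <= 0.
    by apply: sumr_le0 => k _; have := none k; rewrite /= ltNge => /negbFE.
  by rewrite -hs; lra.
have [k hk] : exists k, e k ^+ 2 * s <= b.
  case: (pickP (fun k => e k ^+ 2 * s <= b)) => [k hk|none]; first by exists k.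
  have lt k : b < e k ^+ 2 * s by have := none k; rewrite /= ltNge => ->.
  have h0 : \sum_k (e k ^+ 2 * s - b) * rho k = 0.
    have -> : \sum_k (e k ^+ 2 * s - b) * rho k =
              s * \sum_k (e k ^+ 2 * rho k) - b * \sum_k rho k.
      rewrite !mulr_sumr -sumrB; apply: eq_bigr => j _; ring.
    by rewrite -hb -hs; ring.
  have : 0 < \sum_k (e k ^+ 2 * s - b) * rho k.
    rewrite (bigD1 k0) //=.
    have t1 : 0 < (e k0 ^+ 2 * s - b) * rho k0.
      by apply: mulr_gt0 => //; have := lt k0; lra.
    have t2 : 0 <= \sum_(j | j != k0) (e j ^+ 2 * s - b) * rho j.
      apply: sumr_ge0 => j _; apply: mulr_ge0 => //; have := lt j; lra.
    lra.
  by rewrite h0 ltxx.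
have h1 : `|e k| * vnorm z <= vnorm (B *m z).
  rewrite -(ler_pXn2r (_ : (0 < 2)%N)) ?nnegrE ?mulr_ge0 ?vnorm_ge0 //.
  by rewrite exprMn real_normK ?num_real // -sE -bE.
exists (e k + th); split.
  have := eig k; rewrite /eigenvalue /eigenspace.
  suff -> : B - (e k)%:M = A - (e k + th)%:M by [].
  by rewrite /B raddfD /= opprD addrA [_ - th%:M - _]addrAC.
have -> : th - (e k + th) = - e k by ring.
rewrite normrN; rewrite HBz in h1.
have h2 : `|e k| * (1 / 2) <= `|e k| * vnorm z by apply: ler_wpM2l.
have := normr_ge0 (e k); lra.
Qed.

Lemma eig_diag m (T S : 'M[R]_m) (theta : 'I_m -> R) th :
  S^T *m S = 1%:M -> T = S *m diag_mx (\row_i theta i) *m S^T ->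
  eigenvalue T th -> exists i, th = theta i.
Proof.
move=> HS HT /eigenvalueP [v hv vn0].
have Su : S \in unitmx by case: (mulmx1_unit HS).
pose u := v *m S.
have hu : u *m diag_mx (\row_i theta i) = th *: u.
  rewrite /u scalemxAl -hv HT !mulmxA -!(mulmxA _ _ S) HS mulmx1 //.
have un0 : u != 0.
  apply: contra vn0 => /eqP u0; apply/eqP.
  by rewrite -(mulmxK Su v) -/u u0 mul0mx.
have [i hi] : exists i, u 0 i != 0.
  case: (pickP (fun i => u 0 i != 0)) => [i hi|none]; first by exists i.
  case/negP: un0; apply/eqP/rowP => i; rewrite [RHS]mxE.
  by have := none i; rewrite /= => /negbFE /eqP.
clearbody u; exists i; move/rowP : hu => /(_ i); rewrite mul_mx_diag !mxE => h.
by apply/esym/(mulfI hi); rewrite h mulrC.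
Qed.
End K.

Section M.
Variable R : realType.

Lemma col_eig m (T S : 'M[R]_m) (theta : 'I_m -> R) i :
  S^T *m S = 1%:M -> T = S *m diag_mx (\row_i theta i) *m S^T ->
  T *m col i S = theta i *: col i S.
Proof.
move=> HS HT; rewrite HT -!mulmxA colE (mulmxA S^T) HS mul1mx.
rewrite scalemxAr; congr (S *m _); apply/matrixP => a b.
rewrite mul_diag_mx !mxE; case: (eqVneq a i) => [->|ne].
  by [].
by rewrite /= !mulr0.
Qed.

Lemma col_unit m (S : 'M[R]_m) i : S^T *m S = 1%:M -> vnorm (col i S) = 1.
Proof.
move=> HS; have h : vnorm (col i S) ^+ 2 = 1.
  rewrite vnorm_sq; have := congr1 (fun M : 'M[R]_m => M i i) HS; rewrite /= !mxE eqxx mulr1n => <-.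
  by apply: eq_bigr => k _; rewrite !mxE expr2.
have := vnorm_ge0 (col i S).
move: h; set x := vnorm _ => h hx.
have : (x - 1) * (x + 1) = 0 by rewrite -subr_sqr h expr1n subrr.
move/eqP; rewrite mulf_eq0 => /orP [/eqP|/eqP]; lra.
Qed.

Lemma Ebound n N (p : 'I_N -> nat) (E : 'M[R]_(n, \sum_(j < N) p j))
  (s : 'cV[R]_(\sum_(j < N) p j)) (c : R) : 0 <= c ->
  (forall j, mxnorm (@submxrow R N p n E j) <= c) -> vnorm s = 1 ->
  vnorm (E *m s) <= Num.sqrt N%:R * c.
Proof.
move=> c0 HE hs.
have sq : \sum_j vnorm (submxcol s j) ^+ 2 = 1.
  have := vnormE s; rewrite hs expr1n => ->.
  rewrite -[s]submxcolK tr_mxcol mul_mxrow_mxcol summxE; apply: eq_bigr => j _.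
  by rewrite vnormE !mxcolK.
have h2 : \sum_j vnorm (submxcol s j) <= Num.sqrt N%:R.
  have cs := CS (fun _ : 'I_N => 1) (fun j => vnorm (submxcol s j)).
  rewrite sq mulr1 sumr_const card_ord expr1n in cs.
  have e1 : \sum_(j < N) 1 * vnorm (submxcol s j) = \sum_j vnorm (submxcol s j) by apply: eq_bigr => j _; rewrite mul1r.
  rewrite e1 in cs.
  have s0 : 0 <= \sum_j vnorm (submxcol s j) by apply: sumr_ge0 => j _; exact: vnorm_ge0.
  by rewrite -(ger0_norm s0) -sqrtr_sqr ler_sqrt.
rewrite -[E]submxrowK -[s]submxcolK mul_mxrow_mxcol.
apply: le_trans (vnorm_sum _) _.
have h1 : \sum_j vnorm (submxrow E j *m submxcol s j) <= \sum_j c * vnorm (submxcol s j).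
  apply: ler_sum => j _; apply: le_trans (mxnormP _ _) _.
  by apply: ler_wpM2r; [exact: vnorm_ge0|].
apply: le_trans h1 _; rewrite -mulr_sumr mulrC; exact: ler_wpM2r.
Qed.
End M.

Theorem theorem2 (R : realType) (n N : nat) (p : 'I_N -> nat)
  (A : 'M[R]_n)
  (V : 'M[R]_(n, \sum_(j < N) p j))
  (T : 'M[R]_(\sum_(j < N) p j))
  (E : 'M[R]_(n, \sum_(j < N) p j))
  (S : 'M[R]_(\sum_(j < N) p j))
  (theta : 'I_(\sum_(j < N) p j) -> R)
  (eps1 eps2 : R) :
  A^T = A ->
  T^T = T ->
  block_tridiag T ->
  A *m V = V *m T + E ->
  0 < eps2 ->
  (forall j : 'I_N, mxnorm (@submxrow R N p n E j) <= eps2 * mxnorm A) ->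
  S^T *m S = 1%:M ->
  T = S *m diag_mx (\row_i theta i) *m S^T ->
  0 < eps1 ->
  (forall i, vnorm (V *m col i S) < 1 / 2 ->
     exists j, 1 / 2 <= vnorm (V *m col j S) /\
               `|theta i - theta j| <= eps1 * mxnorm A) ->
  forall th : R, eigenvalue T th ->
    exists lambda : R, eigenvalue A lambda /\
      `|th - lambda| <= 3 * Num.max (Num.sqrt (N%:R) * eps2) eps1 * mxnorm A.
Proof.
move=> HA HT _ HAV e2 HE HS HTS e1 Hz th Hth.
have [i ->] := eig_diag HS HTS Hth.
have a0 : 0 <= mxnorm A := mxnorm_ge0 A.
have key : forall j, 1 / 2 <= vnorm (V *m col j S) -> exists lam,
    eigenvalue A lam /\ `|theta j - lam| <= 2 * (Num.sqrt N%:R * (eps2 * mxnorm A)).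
  move=> j hj; apply: near_eig HA hj _.
  have -> : A *m (V *m col j S) - theta j *: (V *m col j S) = E *m col j S.
    rewrite mulmxA HAV mulmxDl -mulmxA (col_eig _ HS HTS) -scalemxAr.
    by rewrite addrAC subrr add0r.
  apply: Ebound; [exact: mulr_ge0 (ltW e2) a0| exact: HE| exact: col_unit].
set M := Num.max _ _.
have hM1 : Num.sqrt N%:R * eps2 <= M by rewrite le_max lexx.
have hM2 : eps1 <= M by rewrite le_max lexx orbT.
have s0 : 0 <= Num.sqrt N%:R * eps2 by rewrite mulr_ge0 ?sqrtr_ge0 // ltW.
have hMa : Num.sqrt N%:R * eps2 * mxnorm A <= M * mxnorm A by apply: ler_wpM2r.
have hMb : eps1 * mxnorm A <= M * mxnorm A by apply: ler_wpM2r.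
have hs0 : 0 <= Num.sqrt N%:R * eps2 * mxnorm A by apply: mulr_ge0.
case: (lerP (1 / 2) (vnorm (V *m col i S))) => h.
  have [lam [ev hl]] := key i h; exists lam; split => //.
  rewrite mulrA in hl; lra.
have [j [hj hth]] := Hz i h.
have [lam [ev hl]] := key j hj; exists lam; split => //.
have := ler_distD (theta j) (theta i) lam.
rewrite mulrA in hl; lra.
Qed.
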